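(* For any formula $A$, the sequent $\Box(\Box(A\to\Box A)\to A)\Rightarrow A$ is provable in $\mathsf{Grz}_\infty$.
   Context: Formulas are built from $\bot$ and atomic propositions using $\to$ and $\Box$. A sequent is $\Gamma\Rightarrow\Delta$ with $\Gamma,\Delta$ finite multisets of formulas; $\Box\Pi$ denotes the multiset $\{\Box B:B\in\Pi\}$. The calculus $\mathsf{Grz}_\infty$ has initial sequents $\Gamma,p\Rightarrow p,\Delta$ ($p$ atomic) and $\Gamma,\bot\Rightarrow\Delta$, and rules: $(\to_L)$ from $\Gamma,B\Rightarrow\Delta$ and $\Gamma\Rightarrow A,\Delta$ infer $\Gamma,A\to B\Rightarrow\Delta$; $(\to_R)$ from $\Gamma,A\Rightarrow B,\Delta$ infer $\Gamma\Rightarrow A\to B,\Delta$; $(\mathsf{refl})$ from $\Gamma,B,\Box B\Rightarrow\Delta$ infer $\Gamma,\Box B\Rightarrow\Delta$; $(\Box)$ from left premise $\Gamma,\Box\Pi\Rightarrow A,\Delta$ and right premise $\Box\Pi\Rightarrow A$ infer $\Gamma,\Box\Pi\Rightarrow\Box A,\Delta$. An $\infty$-proof is a possibly infinite tree of sequents built by these rules, with leaves labelled by initial sequents, in which every infinite branch passes through a right premise of $(\Box)$ infinitely often; a sequent is provable if it labels the root of an $\infty$-proof. *)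

(* Defs.v *)
From Stdlib Require Import List Permutation Arith.
Import ListNotations.

Inductive form : Type :=
| Bot : form
| Var : nat -> form
| Imp : form -> form -> form
| Box : form -> form.

(** A sequent Gamma => Delta; the lists are read as multisets
    (rule applications are matched up to permutation). *)
Definition sequent : Type := (list form * list form)%type.

Definition seq_equiv (s s' : sequent) : Prop :=
  Permutation (fst s) (fst s') /\ Permutation (snd s) (snd s').

Inductive rule : Type :=
| RInitAt
| RInitBot
| RImpL | RImpR | RRefl | RBox.

(** [step s r prems]: [s] is the conclusion of an instance of rule [r] whose
    premises (in order) are [prems]. For (Box), the premises are
    [left premise; right premise]. *)
Definition step (s : sequent) (r : rule) (prems : list sequent) : Prop :=
  match r with
  | RInitAt => prems = [] /\
      exists G D p, seq_equiv s (Var p :: G, Var p :: D)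
  | RInitBot => prems = [] /\
      exists G D, seq_equiv s (Bot :: G, D)
  | RImpL => exists G D A B, seq_equiv s (Imp A B :: G, D) /\
      prems = [(B :: G, D); (G, A :: D)]
  | RImpR => exists G D A B, seq_equiv s (G, Imp A B :: D) /\
      prems = [(A :: G, B :: D)]
  | RRefl => exists G D B, seq_equiv s (Box B :: G, D) /\
      prems = [(B :: Box B :: G, D)]
  | RBox => exists G D Pi A, seq_equiv s (G ++ map Box Pi, Box A :: D) /\
      prems = [(G ++ map Box Pi, A :: D); (map Box Pi, [A])]
  end.

CoInductive ptree : Type :=
| Node : sequent -> rule -> list ptree -> ptree.

Definition label (t : ptree) : sequent := match t with Node s _ _ => s end.

Definition node_ok (t : ptree) : Prop :=
  match t with Node s r ch => step s r (map label ch) end.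

(** Following a path [p] (p n = index of the child chosen at depth n). *)
Fixpoint walk (t : ptree) (p : nat -> nat) (n : nat) : option ptree :=
  match n with
  | 0 => Some t
  | S m => match walk t p m with
           | Some (Node _ _ ch) => nth_error ch (p m)
           | None => None
           end
  end.

Definition box_right_step (t : ptree) (p : nat -> nat) (n : nat) : Prop :=
  (exists s ch, walk t p n = Some (Node s RBox ch)) /\ p n = 1.

(** An infinite-proof: every node is a correct rule instance (leaves are
    thus initial sequents), and every infinite branch passes through a
    right premise of (Box) infinitely often. *)
Definition inf_proof (t : ptree) : Prop :=
  (forall p n t', walk t p n = Some t' -> node_ok t') /\
  (forall p, (forall n, walk t p n <> None) ->
     forall N, exists n, N <= n /\ box_right_step t p n).

Definition Grz_provable (s : sequent) : Prop :=
  exists t, inf_proof t /\ label t = s.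

(* Main.v *)
Require Import Defs.
From Stdlib Require Import List Permutation Arith Lia.
Import ListNotations.

Fixpoint fph (k : nat) (t : ptree) : Prop :=
  match k with
  | 0 => False
  | S k => match t with Node s r ch =>
             step s r (map label ch) /\ (forall c, In c ch -> fph k c) end
  end.

Lemma fph_S : forall k t, fph k t -> fph (S k) t.
Proof.
  induction k as [|k IH]; intros [s r ch] H; simpl in *; [contradiction|].
  destruct H as [H1 H2]; split; auto. intros c Hc; apply IH; auto.
Qed.

Lemma fph_le : forall k k' t, k <= k' -> fph k t -> fph k' t.
Proof.
  intros k k' t Hle; induction Hle; auto using fph_S.
Qed.

Definition fp t := exists k, fph k t.

Lemma walk_S : forall s r ch p n,
  walk (Node s r ch) p (S n) =
  match nth_error ch (p 0) with
  | Some c => walk c (fun k => p (S k)) n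
  | None => None end.
Proof.
  intros s r ch p n; induction n as [|n IH].
  - simpl. destruct (nth_error ch (p 0)); reflexivity.
  - change (walk (Node s r ch) p (S (S n))) with
      (match walk (Node s r ch) p (S n) with
       | Some (Node _ _ ch) => nth_error ch (p (S n))
       | None => None end).
    rewrite IH. destruct (nth_error ch (p 0)) as [c|]; [|reflexivity].
    simpl. reflexivity.
Qed.

Lemma walk_add : forall t p N m,
  walk t p (N + m) =
  match walk t p N with
  | Some t' => walk t' (fun k => p (N + k)) m
  | None => None end.
Proof.
  intros t p N m; induction m as [|m IH].
  - rewrite Nat.add_0_r. destruct (walk t p N); reflexivity.
  - rewrite Nat.add_succ_r. simpl. rewrite IH.
    destruct (walk t p N) as [t'|]; reflexivity.
Qed.

Lemma fph_walk : forall k t p, fph k t -> walk t p k = None.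
Proof.
  induction k as [|k IH]; intros [s r ch] p H; simpl in H; [contradiction|].
  destruct H as [_ H]. rewrite walk_S.
  destruct (nth_error ch (p 0)) eqn:E; [|reflexivity].
  apply IH, H. eapply nth_error_In; eauto.
Qed.

Fixpoint id_tree (B : form) (G D G0 D0 : list form) : ptree :=
  match B with
  | Bot => Node (G, D) RInitBot []
  | Var _ => Node (G, D) RInitAt []
  | Imp X Y => Node (G, D) RImpR
      [Node (X :: G, Y :: D0) RImpL
         [id_tree Y (Y :: X :: G0) (Y :: D0) (X :: G0) D0;
          id_tree X (X :: G0) (X :: Y :: D0) G0 (Y :: D0)]]
  | Box X => Node (G, D) RBox
      [Node (G0 ++ [Box X], X :: D0) RRefl
         [id_tree X (X :: Box X :: G0) (X :: D0) (Box X :: G0) D0];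
       Node ([Box X], [X]) RRefl [id_tree X [X; Box X] [X] [Box X] []]]
  end.

Lemma id_label : forall B G D G0 D0, label (id_tree B G D G0 D0) = (G, D).
Proof. destruct B; reflexivity. Qed.

Lemma id_ok : forall B G D G0 D0,
  Permutation G (B :: G0) -> Permutation D (B :: D0) ->
  fp (id_tree B G D G0 D0).
Proof.
  induction B as [| n | X IHX Y IHY | X IHX]; intros G D G0 D0 HG HD.
  - exists 1; simpl; split; [|intros c []].
    split; [reflexivity|]. exists G0, D. split; auto.
  - exists 1; simpl; split; [|intros c []].
    split; [reflexivity|]. exists G0, D0, n. split; auto.
  - destruct (IHY (Y :: X :: G0) (Y :: D0) (X :: G0) D0) as [k1 H1];
      try apply Permutation_refl.
    destruct (IHX (X :: G0) (X :: Y :: D0) G0 (Y :: D0)) as [k2 H2];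
      try apply Permutation_refl.
    exists (S (S (max k1 k2))). simpl. split.
    + exists G, D0, X, Y. split; [split; simpl; auto|reflexivity].
    + intros c [<-|[]]. simpl. split.
      * exists (X :: G0), (Y :: D0), X, Y. rewrite !id_label. split; [|reflexivity].
        split; simpl; [|apply Permutation_refl].
        eapply Permutation_trans; [apply perm_skip, HG| apply perm_swap].
      * intros c [<-|[<-|[]]]; [eapply fph_le; [|exact H1]; lia|eapply fph_le; [|exact H2]; lia].
  - destruct (IHX (X :: Box X :: G0) (X :: D0) (Box X :: G0) D0) as [k1 H1];
      try apply Permutation_refl.
    destruct (IHX [X; Box X] [X] [Box X] []) as [k2 H2];
      try apply Permutation_refl.
    exists (S (S (max k1 k2))). simpl. split.
    + exists G0, D0, [X], X. split; [|reflexivity].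
      split; simpl; auto.
      eapply Permutation_trans; [apply HG|apply Permutation_cons_append].
    + intros c [<-|[<-|[]]]; simpl; split.
      * exists G0, (X :: D0), X. rewrite !id_label. split; [|reflexivity].
        split; simpl; [|apply Permutation_refl].
        apply Permutation_sym, Permutation_cons_append.
      * intros c [<-|[]]. eapply fph_le; [|exact H1]; lia.
      * exists [], [X], X. rewrite !id_label. split; [|reflexivity].
        split; simpl; apply Permutation_refl.
      * intros c [<-|[]]. eapply fph_le; [|exact H2]; lia.
Qed.

Section Main.
Variable A : form.
Definition Cf := Imp (Box (Imp A (Box A))) A.
Definition Ff := Box Cf.

CoFixpoint T : ptree :=
  Node ([Ff], [A]) RRefl
   [Node ([Cf; Ff], [A]) RImpL
     [id_tree A [A; Ff] [A] [Ff] [];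
      Node ([Ff], [Box (Imp A (Box A)); A]) RBox
        [Node ([Ff], [Imp A (Box A); A]) RImpR
           [id_tree A [A; Ff] [Box A; A] [Ff] [Box A]];
         Node ([Ff], [Imp A (Box A)]) RImpR
           [Node ([A; Ff], [Box A]) RBox
              [id_tree A [A; Ff] [A] [Ff] []; T]]]]].

Definition N4 := Node ([A; Ff], [Box A]) RBox [id_tree A [A; Ff] [A] [Ff] []; T].
Definition N3 := Node ([Ff], [Imp A (Box A)]) RImpR [N4].
Definition L2 := Node ([Ff], [Imp A (Box A); A]) RImpR
           [id_tree A [A; Ff] [Box A; A] [Ff] [Box A]].
Definition N2 := Node ([Ff], [Box (Imp A (Box A)); A]) RBox [L2; N3].
Definition N1 := Node ([Cf; Ff], [A]) RImpL [id_tree A [A; Ff] [A] [Ff] []; N2].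

Lemma frob : forall t, t = match t with Node s r c => Node s r c end.
Proof. destruct t; reflexivity. Qed.

Lemma T_eq : T = Node ([Ff], [A]) RRefl [N1].
Proof. rewrite (frob T) at 1. reflexivity. Qed.

Lemma L2_fp : fp L2.
Proof.
  destruct (id_ok A [A; Ff] [Box A; A] [Ff] [Box A]) as [k Hk].
  - apply Permutation_refl.
  - apply perm_swap.
  - exists (S k). simpl. split.
    + exists [Ff], [A], A, (Box A). rewrite id_label. split; [|reflexivity].
      split; apply Permutation_refl.
    + intros c [<-|[]]; exact Hk.
Qed.

Lemma I_fp : fp (id_tree A [A; Ff] [A] [Ff] []).
Proof. apply id_ok; apply Permutation_refl. Qed.

Definition Inv t := t = T \/ t = N1 \/ t = N2 \/ t = N3 \/ t = N4 \/ fp t.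

Lemma Inv_ok : forall t, Inv t -> node_ok t.
Proof.
  intros t [H|[H|[H|[H|[H|[k H]]]]]]; subst.
  - rewrite T_eq. simpl. exists [], [A], Cf. split; [|reflexivity].
    split; apply Permutation_refl.
  - simpl. exists [Ff], [A], (Box (Imp A (Box A))), A. rewrite id_label.
    split; [|reflexivity]. split; apply Permutation_refl.
  - simpl. exists [], [A], [Cf], (Imp A (Box A)).
    split; [split; apply Permutation_refl|reflexivity].
  - simpl. exists [Ff], [], A, (Box A).
    split; [split; apply Permutation_refl|reflexivity].
  - simpl. exists [A], [], [Cf], A. rewrite id_label.
    split; [split; apply Permutation_refl|reflexivity].
  - destruct k as [|k]; [contradiction|]. destruct t as [s r ch]. apply H.
Qed.

Lemma Inv_child : forall s r ch c, Inv (Node s r ch) -> In c ch -> Inv c.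
Proof.
  intros s r ch c [H|[H|[H|[H|[H|[k H]]]]]] Hc.
  - rewrite T_eq in H. injection H as _ _ ->. destruct Hc as [<-|[]]. unfold Inv; tauto.
  - injection H as _ _ ->. destruct Hc as [<-|[<-|[]]]; unfold Inv; [right; right; right; right; right; apply I_fp|tauto].
  - injection H as _ _ ->. destruct Hc as [<-|[<-|[]]]; unfold Inv; [right; right; right; right; right; apply L2_fp|tauto].
  - injection H as _ _ ->. destruct Hc as [<-|[]]; unfold Inv; tauto.
  - injection H as _ _ ->. destruct Hc as [<-|[<-|[]]]; unfold Inv; [right; right; right; right; right; apply I_fp|tauto].
  - destruct k as [|k]; [contradiction|]. simpl in H. destruct H as [_ H].
    right; right; right; right; right. exists k; auto.
Qed.

Lemma Inv_walk : forall p n t t', Inv t -> walk t p n = Some t' -> Inv t'.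
Proof.
  intros p n; induction n as [|n IH]; intros t t' Ht Hw.
  - simpl in Hw. injection Hw as <-. exact Ht.
  - simpl in Hw. destruct (walk t p n) as [[s r ch]|] eqn:E; [|discriminate].
    eapply Inv_child; [eapply IH; eauto|]. eapply nth_error_In; eauto.
Qed.

Definition infw t p := forall n, walk t p n <> None.

Lemma step_down : forall s r ch p, infw (Node s r ch) p ->
  exists c, nth_error ch (p 0) = Some c /\ infw c (fun k => p (S k)).
Proof.
  intros s r ch p H. destruct (nth_error ch (p 0)) as [c|] eqn:E.
  - exists c; split; auto. intros n. specialize (H (S n)). rewrite walk_S, E in H. exact H.
  - exfalso. apply (H 1). rewrite walk_S, E. reflexivity.
Qed.

Lemma lift_brs : forall s r ch p c n, nth_error ch (p 0) = Some c ->
  box_right_step c (fun k => p (S k)) n -> box_right_step (Node s r ch) p (S n).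
Proof.
  intros s r ch p c n E [[s' [ch' H1]] H2]. split; auto.
  exists s', ch'. rewrite walk_S, E. exact H1.
Qed.

Lemma fp_not_inf : forall t p, fp t -> infw t p -> False.
Proof. intros t p [k Hk] H. apply (H k). apply fph_walk; auto. Qed.

Ltac down H :=
  let c := fresh "c" in let E := fresh "E" in let Hi := fresh "Hi" in
  destruct (step_down _ _ _ _ H) as [c [E Hi]].

Lemma N4_brs : forall p, infw N4 p -> exists n, box_right_step N4 p n.
Proof.
  intros p H. unfold N4 in H. down H.
  destruct (p 0) as [|[|m]] eqn:Ep; simpl in E; [| |destruct m; discriminate]; injection E as <-.
  - exfalso. eapply fp_not_inf; [apply I_fp|exact Hi].
  - exists 0. split; auto. exists ([A; Ff], [Box A]), [id_tree A [A; Ff] [A] [Ff] []; T].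
    reflexivity.
Qed.

Lemma N3_brs : forall p, infw N3 p -> exists n, box_right_step N3 p n.
Proof.
  intros p H. unfold N3 in H. down H.
  destruct (p 0) as [|m] eqn:Ep; simpl in E; [|destruct m; discriminate]. injection E as <-.
  destruct (N4_brs _ Hi) as [n Hn]. exists (S n). eapply lift_brs; eauto.
  rewrite Ep; reflexivity.
Qed.

Lemma N2_brs : forall p, infw N2 p -> exists n, box_right_step N2 p n.
Proof.
  intros p H. unfold N2 in H. down H.
  destruct (p 0) as [|[|m]] eqn:Ep; simpl in E; [| |destruct m; discriminate]; injection E as <-.
  - exfalso. eapply fp_not_inf; [apply L2_fp|exact Hi].
  - destruct (N3_brs _ Hi) as [n Hn]. exists (S n). eapply lift_brs; eauto.
    rewrite Ep; reflexivity.
Qed.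

Lemma N1_brs : forall p, infw N1 p -> exists n, box_right_step N1 p n.
Proof.
  intros p H. unfold N1 in H. down H.
  destruct (p 0) as [|[|m]] eqn:Ep; simpl in E; [| |destruct m; discriminate]; injection E as <-.
  - exfalso. eapply fp_not_inf; [apply I_fp|exact Hi].
  - destruct (N2_brs _ Hi) as [n Hn]. exists (S n). eapply lift_brs; eauto.
    rewrite Ep; reflexivity.
Qed.

Lemma T_brs : forall p, infw T p -> exists n, box_right_step T p n.
Proof.
  intros p H. rewrite T_eq in H |- *. down H.
  destruct (p 0) as [|m] eqn:Ep; simpl in E; [|destruct m; discriminate]. injection E as <-.
  destruct (N1_brs _ Hi) as [n Hn]. exists (S n). eapply lift_brs; eauto.
  rewrite Ep; reflexivity.
Qed.

Lemma Inv_brs : forall t p, Inv t -> infw t p -> exists n, box_right_step t p n.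
Proof.
  intros t p [H|[H|[H|[H|[H|H]]]]] Hi; subst;
    auto using T_brs, N1_brs, N2_brs, N3_brs, N4_brs.
  exfalso; eapply fp_not_inf; eauto.
Qed.

Lemma T_proof : inf_proof T.
Proof.
  split.
  - intros p n t' Hw. apply Inv_ok. eapply Inv_walk; [|exact Hw]. left; reflexivity.
  - intros p Hinf N.
    destruct (walk T p N) as [t'|] eqn:EN; [|exfalso; exact (Hinf N EN)].
    assert (Ht' : Inv t') by (eapply Inv_walk; [left; reflexivity|exact EN]).
    assert (Hi : infw t' (fun k => p (N + k))).
    { intros m Hm. apply (Hinf (N + m)). rewrite walk_add, EN. exact Hm. }
    destruct (Inv_brs _ _ Ht' Hi) as [m [[s [ch Hw]] Hp]].
    exists (N + m). split; [lia|]. split; auto.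
    exists s, ch. rewrite walk_add, EN. exact Hw.
Qed.
End Main.

Theorem lemma3p2 : forall A : form,
  Grz_provable ([Box (Imp (Box (Imp A (Box A))) A)], [A]).
Proof.
  intros A. exists (T A). split; [apply T_proof|].
  rewrite T_eq. reflexivity.
Qed.
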